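(* Let $X,Y$ be totally ordered alphabets. The linear map $\Phi_\bullet(X,Y):\mathbf{H}_\mathrm{Pack}\to\mathbf{A}_{X,Y}$, $M\mapsto\Phi_M(X,Y)$, is injective if and only if both $X$ and $Y$ are infinite.
   Context: A totally ordered alphabet is a finite or countable set with a total order. For totally ordered alphabets $X,Y$, $\mathbf{A}_{X,Y}=\mathbb{Q}[[t_{i,j}\mid i\in X,\ j\in Y]]$ (commuting indeterminates). A packed matrix is a matrix with entries in $\mathbb{N}$ with no zero row and no zero column (the empty matrix $1$ is packed); $\mathrm{Pack}$ is their set and $\mathbf{H}_\mathrm{Pack}$ the $\mathbb{Q}$-vector space with basis $\mathrm{Pack}$. For $M=(m_{r,s})\in\mathrm{Pack}$ with $k$ rows and $l$ columns, $\Phi_M(X,Y)=\sum_{i_1<\dots<i_k\in X,\ j_1<\dots<j_l\in Y}\prod_{r=1}^k\prod_{s=1}^l t_{i_r,j_s}^{m_{r,s}}$ ($\Phi_1=1$), extended linearly. *)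

(* Defs.v *)
From HB Require Import structures.
From mathcomp Require Import all_boot all_order all_algebra.
From mathcomp Require Import finmap.
From Stdlib Require Import ClassicalEpsilon.
Set Implicit Arguments. Unset Strict Implicit. Unset Printing Implicit Defensive.
Import Order.TTheory GRing.Theory Num.Theory.

(* A totally ordered alphabet: a type with a total order (orderType) which is
   finite or countable, i.e. injects into nat. *)
Definition alphabet_countable (T : Type) : Prop :=
  exists f : T -> nat, injective f.

Definition infinite_type (T : eqType) : Prop :=
  forall s : seq T, exists x : T, x \notin s.

Definition natMatrix := {kl : nat * nat & 'M[nat]_(kl.1, kl.2)}.

(* packed: no zero row and no zero column (the empty 0x0 matrix is packed). *)
Definition packedb (A : natMatrix) : bool :=
  let M := tagged A in
  [forall r, [exists s, M r s != 0%N]] && [forall s, [exists r, M r s != 0%N]].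

Definition Pack := {A : natMatrix | packedb A}.

(* H_Pack : the Q-vector space with basis Pack = finitely supported
   functions Pack -> Q. *)
Definition HPack := {fsfun Pack -> rat with 0%R}.

(* A_{X,Y} = Q[[t_{i,j}]] : a series is given by its coefficient function on
   monomials; a monomial prod t_{x,y}^{e x y} is encoded by its exponent
   function e (series are compared coefficientwise). *)
Definition series (X Y : Type) := (X -> Y -> nat) -> rat.

Section Phi.
Context {dX dY : Order.disp_t} {X : orderType dX} {Y : orderType dY}.

Definition strictly_increasing (k : nat) {d} {T : orderType d} (i : 'I_k -> T) :=
  forall r s : 'I_k, (r < s)%N -> (i r < i s)%O.

(* exponent of t_{x,y} in prod_r prod_s t_{i_r, j_s}^{m_{r,s}} *)
Definition mono_of (k l : nat) (i : 'I_k -> X) (j : 'I_l -> Y)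
  (M : 'M[nat]_(k, l)) : X -> Y -> nat :=
  fun x y => (\sum_(r < k) \sum_(s < l) ((i r == x) && (j s == y)) * M r s)%N.

(* coefficient of the monomial e in Phi_M(X,Y): the monomials of the defining
   sum are pairwise distinct for packed M, so the coefficient is 1 if e arises
   from some increasing i_1<..<i_k, j_1<..<j_l and 0 otherwise. *)
Definition Phi (A : Pack) : series X Y :=
  fun e =>
    let: existT kl M := val A in
    if excluded_middle_informative
         (exists (i : 'I_kl.1 -> X) (j : 'I_kl.2 -> Y),
            strictly_increasing i /\ strictly_increasing j /\
            mono_of i j M = e)
    then 1%R else 0%R.

Definition Phi_lin (f : HPack) : series X Y :=
  fun e => (\sum_(A <- finsupp f) f A * Phi A e)%R.

Definition Phi_injective : Prop :=
  forall f g : HPack, (forall e, Phi_lin f e = Phi_lin g e) -> f = g.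
End Phi.

(* Main.v *)
Require Import Defs.
From HB Require Import structures.
From mathcomp Require Import all_boot all_order all_algebra finmap.
From Stdlib Require Import Classical ClassicalEpsilon.
Set Implicit Arguments. Unset Strict Implicit. Unset Printing Implicit Defensive.
Import Order.TTheory GRing.Theory Num.Theory.
Open Scope fset_scope.

Section S.
Context {d : Order.disp_t} {X : orderType d}.

Lemma inc_inj k (i : 'I_k -> X) : strictly_increasing i -> injective i.
Proof.
move=> hi r s e; apply/val_inj; case: (ltngtP r s) => // h.
- by move: (hi _ _ h); rewrite e ltxx.
- by move: (hi _ _ h); rewrite e ltxx.
Qed.

Lemma inc_sorted k (i : 'I_k -> X) : strictly_increasing i ->
  sorted <%O (map i (enum 'I_k)).
Proof.
move=> hi; rewrite sorted_map.
have : sorted (relpre val ltn) (enum 'I_k) by rewrite -sorted_map val_enum_ord iota_ltn_sorted.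
by apply: sub_sorted => a b /=; apply: hi.
Qed.

Lemma nth_map_ord n (f : 'I_n -> X) (r : 'I_n) x0 :
  nth x0 (map f (enum 'I_n)) r = f r.
Proof. by rewrite (nth_map r) ?size_enum_ord // fintype.nth_ord_enum. Qed.

Lemma inc_unique k k' (i : 'I_k -> X) (i' : 'I_k' -> X) :
  strictly_increasing i -> strictly_increasing i' ->
  (forall x, (exists r, i r = x) <-> (exists r, i' r = x)) ->
  exists e : k = k', forall r, i r = i' (cast_ord e r).
Proof.
move=> hi hi' hx.
have E : map i (enum 'I_k) = map i' (enum 'I_k').
  apply: lt_sorted_eq; try exact: inc_sorted.
  move=> x; apply/mapP/mapP => -[r _ ->].
  - have [r' <-] : exists r', i' r' = i r by apply/hx; exists r.
    by exists r'; rewrite ?mem_enum.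
  - have [r' <-] : exists r', i r' = i' r by apply/hx; exists r.
    by exists r'; rewrite ?mem_enum.
have ek : k = k' by move: (congr1 size E); rewrite !size_map -!enumT !size_enum_ord.
exists ek => r; subst k'.
have := congr1 (fun s => nth (i r) s r) E; rewrite /= !nth_map_ord => ->.
by congr i'; apply: val_inj.
Qed.

Lemma infinite_inc k : infinite_type X -> exists i : 'I_k -> X, strictly_increasing i.
Proof.
move=> hX.
have [s [us ss]] : exists s : seq X, uniq s /\ size s = k.
  elim: k => [|k [s [us ss]]]; first by exists [::].
  have [x hx] := hX s; exists (x :: s); by rewrite /= hx us ss.
have [x0 _] := hX [::].
pose t := sort <=%O s.
have st : sorted <%O t.
  by rewrite lt_sorted_uniq_le sort_uniq us sort_sorted //; exact: le_total.
have szt : size t = k by rewrite size_sort.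
exists (fun r => nth x0 t r) => r r' h.
by apply: (sorted_ltn_nth lt_trans) => //; rewrite inE szt.
Qed.

Lemma finite_noinc s k (i : 'I_k -> X) : (forall x : X, x \in s) ->
  strictly_increasing i -> k <= size s.
Proof.
move=> hs hi.
have := @uniq_leq_size _ (map i (enum 'I_k)) s.
rewrite size_map size_enum_ord; apply => //.
by rewrite map_inj_uniq ?enum_uniq //; apply: inc_inj.
Qed.
End S.

Local Open Scope ring_scope.
Section M.
Context {dX dY : Order.disp_t} {X : orderType dX} {Y : orderType dY}.

Section Mono.
Variables (k l : nat) (i : 'I_k -> X) (j : 'I_l -> Y) (M : 'M[nat]_(k, l)).
Hypotheses (hi : strictly_increasing i) (hj : strictly_increasing j).

Lemma mono_at r s : mono_of i j M (i r) (j s) = M r s.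
Proof.
rewrite /mono_of (bigD1 r) //= (bigD1 s) //= !eqxx /= mul1n.
rewrite big1 ?addn0; last first.
  by move=> s' hs'; rewrite (inj_eq (inc_inj hj)) (negbTE hs') ?andbF.
rewrite big1 ?addn0 // => r' hr'; apply: big1 => s' _.
by rewrite (inj_eq (inc_inj hi)) (negbTE hr').
Qed.

Lemma mono_out_row x y : (forall r, i r != x) -> mono_of i j M x y = 0%N.
Proof. by move=> h; apply: big1 => r _; apply: big1 => s _; rewrite (negbTE (h r)). Qed.

Lemma mono_out_col x y : (forall s, j s != y) -> mono_of i j M x y = 0%N.
Proof. by move=> h; apply: big1 => r _; apply: big1 => s _; rewrite (negbTE (h s)) andbF. Qed.

Lemma img_row x : (forall r, exists s, M r s != 0%N) ->
  (exists r, i r = x) <-> (exists y, mono_of i j M x y != 0%N).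
Proof.
move=> hM; split.
  by move=> [r <-]; have [s hs] := hM r; exists (j s); rewrite mono_at.
move=> [y hy]; case: (classic (exists r, i r = x)) => // H; exfalso.
move: hy; rewrite mono_out_row ?eqxx // => r; apply/eqP => e; apply: H; by exists r.
Qed.

Lemma img_col y : (forall s, exists r, M r s != 0%N) ->
  (exists s, j s = y) <-> (exists x, mono_of i j M x y != 0%N).
Proof.
move=> hM; split.
  by move=> [s <-]; have [r hr] := hM s; exists (i r); rewrite mono_at.
move=> [x hx]; case: (classic (exists s, j s = y)) => // H; exfalso.
move: hx; rewrite mono_out_col ?eqxx // => s; apply/eqP => e; apply: H; by exists s.
Qed.
End Mono.

Lemma mono_eq k l k' l' (M : 'M[nat]_(k, l)) (M' : 'M[nat]_(k', l'))
  (i : 'I_k -> X) (j : 'I_l -> Y) (i' : 'I_k' -> X) (j' : 'I_l' -> Y) :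
  packedb (existT (fun kl : nat * nat => 'M[nat]_(kl.1, kl.2)) (k, l) M) ->
  packedb (existT (fun kl : nat * nat => 'M[nat]_(kl.1, kl.2)) (k', l') M') ->
  strictly_increasing i -> strictly_increasing j ->
  strictly_increasing i' -> strictly_increasing j' ->
  mono_of i j M = mono_of i' j' M' ->
  existT (fun kl : nat * nat => 'M[nat]_(kl.1, kl.2)) (k, l) M =
  existT (fun kl : nat * nat => 'M[nat]_(kl.1, kl.2)) (k', l') M'.
Proof.
move=> /andP [/forallP hr /forallP hc] /andP [/forallP hr' /forallP hc'] hi hj hi' hj' E.
have hR : forall r, exists s, M r s != 0%N by move=> r; apply/existsP; exact: hr.
have hC : forall s, exists r, M r s != 0%N by move=> s; apply/existsP; exact: hc.
have hR' : forall r, exists s, M' r s != 0%N by move=> r; apply/existsP; exact: hr'.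
have hC' : forall s, exists r, M' r s != 0%N by move=> s; apply/existsP; exact: hc'.
have imX : forall x, (exists r, i r = x) <-> (exists r, i' r = x).
  move=> x; split=> h.
    by apply/(img_row (M:=M') hi' hj' x hR'); rewrite -E; exact/(img_row (M:=M) hi hj x hR).
  by apply/(img_row (M:=M) hi hj x hR); rewrite E; exact/(img_row (M:=M') hi' hj' x hR').
have imY : forall y, (exists s, j s = y) <-> (exists s, j' s = y).
  move=> y; split=> h.
    by apply/(img_col (M:=M') hi' hj' y hC'); rewrite -E; exact/(img_col (M:=M) hi hj y hC).
  by apply/(img_col (M:=M) hi hj y hC); rewrite E; exact/(img_col (M:=M') hi' hj' y hC').
have [ek hk] := inc_unique hi hi' imX.
have [el hl] := inc_unique hj hj' imY.
subst k' l'.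
have -> : M = M'.
  apply/matrixP => r s.
  by rewrite -(mono_at M hi hj) E hk hl !cast_ord_id (mono_at M' hi' hj').
by [].
Qed.

Lemma Phi_eA k l (M : 'M[nat]_(k, l)) pA (i : 'I_k -> X) (j : 'I_l -> Y)
  (hi : strictly_increasing i) (hj : strictly_increasing j) (B : Pack) :
  Phi B (mono_of i j M) =
  (B == exist _ (existT (fun kl : nat * nat => 'M[nat]_(kl.1, kl.2)) (k, l) M) pA)%:R.
Proof.
case: eqP => [->|ne].
  rewrite /Phi /=; case: excluded_middle_informative => // -[].
  by exists i, j.
case: B ne => [[[k' l'] M'] pB] ne.
rewrite /Phi /=; case: excluded_middle_informative => // -[i' [j' [hi' [hj' e]]]].
exfalso; apply: ne; apply: val_inj => /=.
by apply: (mono_eq pB pA hi' hj' hi hj e).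
Qed.

Lemma Phi_lin_eA (f : HPack) k l (M : 'M[nat]_(k, l)) pA (i : 'I_k -> X) (j : 'I_l -> Y)
  (hi : strictly_increasing i) (hj : strictly_increasing j) :
  Phi_lin f (mono_of i j M) =
  f (exist _ (existT (fun kl : nat * nat => 'M[nat]_(kl.1, kl.2)) (k, l) M) pA).
Proof.
rewrite /Phi_lin.
under eq_bigr => B _ do rewrite (Phi_eA pA hi hj).
set A := exist _ _ pA.
case: (boolP (A \in finsupp f)) => hA.
  rewrite (bigD1_seq A) ?fset_uniq //= eqxx mulr1 big1 ?addr0 // => B /negbTE ->.
  by rewrite mulr0.
rewrite big1_seq.
  by move: hA; rewrite memNfinsupp => /eqP ->.
move=> B hB; rewrite (_ : (B == A) = false) ?mulr0 //.
by apply/negbTE; apply: contraNneq hA => <-.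
Qed.
End M.

Lemma not_inf (d : Order.disp_t) (T : orderType d) :
  ~ infinite_type T -> exists s : seq T, forall x, x \in s.
Proof.
move=> /not_all_ex_not [s hs]; exists s => x.
by case: (boolP (x \in s)) => // h; exfalso; apply: hs; exists x.
Qed.

Theorem mainTheorem12 (dX dY : Order.disp_t) (X : orderType dX) (Y : orderType dY)
  (hX : alphabet_countable X) (hY : alphabet_countable Y) :
  @Phi_injective dX dY X Y <-> (infinite_type X /\ infinite_type Y).
Proof.
split.
- move=> inj.
  have key : forall (A : Pack), (forall e, @Phi dX dY X Y A e = 0) -> False.
    move=> A hA.
    pose f : HPack := [fsfun a in [fset A] => (1 : rat) | 0].
    pose g : HPack := [fsfun].
    have : f = g.
      apply: inj => e; rewrite /Phi_lin.
      rewrite [RHS]big1_seq; last by move=> B _; rewrite fsfunE /= mul0r.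
      rewrite big1_seq // => B _; rewrite fsfunE; case: ifP => [/fset1P -> | _].
        by rewrite hA mulr0.
      by rewrite mul0r.
    move/(congr1 (fun h : HPack => h A)); rewrite !fsfunE fset11.
    by move/eqP; rewrite oner_eq0.
  split.
  + apply: NNPP => /not_inf [s hs].
    pose Mx : 'M[nat]_((size s).+1, 1) := const_mx 1%N.
    have pA : packedb (existT (fun kl : nat * nat => 'M[nat]_(kl.1, kl.2)) ((size s).+1, 1%N) Mx).
      apply/andP; split; apply/forallP => r; apply/existsP; exists ord0; by rewrite mxE.
    apply: (key (exist (fun A => is_true (packedb A)) _ pA)) => e; rewrite /Phi /=.
    destruct excluded_middle_informative as [[i [j [hi hh]]]|] => //.
    by have := finite_noinc hs hi; rewrite ltnn.
  + apply: NNPP => /not_inf [s hs].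
    pose Mx : 'M[nat]_(1, (size s).+1) := const_mx 1%N.
    have pA : packedb (existT (fun kl : nat * nat => 'M[nat]_(kl.1, kl.2)) (1%N, (size s).+1) Mx).
      apply/andP; split; apply/forallP => r; apply/existsP; exists ord0; by rewrite mxE.
    apply: (key (exist (fun A => is_true (packedb A)) _ pA)) => e; rewrite /Phi /=.
    destruct excluded_middle_informative as [[i [j [hh [hj hh2]]]]|] => //.
    by have := finite_noinc hs hj; rewrite ltnn.
- move=> [iX iY] f g H; apply/fsfunP => -[[[k l] M] pA].
  have [i hi] := infinite_inc k iX.
  have [j hj] := infinite_inc l iY.
  have := H (mono_of i j M).
  by rewrite (Phi_lin_eA f pA hi hj) (Phi_lin_eA g pA hi hj).
Qed.
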